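(* Let $\mathcal{H}=(V,E)$ be a hypergraph and let $\mathbf{v}^*$ be an optimal solution of the linear program: minimize $\sum_{x\in V}v_x$ subject to $\sum_{x\in e}v_x\ge1$ for all $e\in E$ and $v_x\ge0$ for all $x\in V$. Consider the linear program: maximize $\sum_{x\in V}\psi_x$ subject to $\sum_{x\in e}\psi_x\le 1$ for every $e\in E$ with $\sum_{x\in e}v^*_x=1$, $\psi_x\le 0$ for every $x$ with $v^*_x=0$, and $\psi_x\ge0$ for all $x\in V$. Then $\mathbf{v}^*$ is an optimal solution of the second linear program. *)

(* Defs.v *)
From mathcomp Require Import all_boot all_order all_algebra.
Set Implicit Arguments. Unset Strict Implicit. Unset Printing Implicit Defensive.
Import Order.TTheory GRing.Theory Num.Theory.
Local Open Scope ring_scope.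

Section LPs.
Variables (R : realFieldType) (V : finType) (E : {set {set V}}).

Definition cover_feasible (v : V -> R) : Prop :=
  (forall e, e \in E -> 1 <= \sum_(x in e) v x) /\ (forall x, 0 <= v x).

Definition cover_optimal (v : V -> R) : Prop :=
  cover_feasible v /\
  forall w : V -> R, cover_feasible w -> \sum_x v x <= \sum_x w x.

Definition lp2_feasible (vs psi : V -> R) : Prop :=
  (forall e, e \in E -> \sum_(x in e) vs x = 1 -> \sum_(x in e) psi x <= 1) /\
  (forall x, vs x = 0 -> psi x <= 0) /\
  (forall x, 0 <= psi x).

Definition lp2_optimal (vs psi : V -> R) : Prop :=
  lp2_feasible vs psi /\
  forall phi : V -> R, lp2_feasible vs phi -> \sum_x phi x <= \sum_x psi x.

End LPs.

(* Main.v *)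
Require Import Defs.
From mathcomp Require Import all_boot all_order all_algebra.
From mathcomp Require Import lra.
Import Order.TTheory GRing.Theory Num.Theory.
Local Open Scope ring_scope.

Lemma term_le (R : realFieldType) (I : finType) (P : pred I) (F : I -> R) i :
  P i -> (forall j, P j -> 0 <= F j) -> F i <= \sum_(j | P j) F j.
Proof.
move=> Pi F0; rewrite (bigD1 i) //= lerDl sumr_ge0 // => j /andP[/F0 +] //.
Qed.

Lemma key_ineq (R : realFieldType) (K a b : R) :
  0 <= K -> 0 < b -> `|a| / b <= K -> (1 + K)^-1 * a <= b.
Proof.
move=> K0 b0; rewrite ler_pdivrMr // => h.
have K1 : 0 < 1 + K by lra.
rewrite mulrC ler_pdivrMr //.
have := ler_norm a; nra.
Qed.

Theorem lemmaF1 (R : realFieldType) (V : finType) (E : {set {set V}})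
  (vs : V -> R) :
  cover_optimal E vs -> lp2_optimal E vs vs.
Proof.
move=> [[cov nn] opt]; split.
  split; first by move=> e _ ->.
  split; [by move=> x -> | exact: nn].
move=> phi [ph1 [ph2 ph3]].
rewrite leNgt; apply/negP => H.
pose s (e : {set V}) := \sum_(x in e) vs x.
pose p (e : {set V}) := \sum_(x in e) phi x.
pose F1 (e : {set V}) := `|p e - s e| / (s e - 1).
pose F2 (x : V) := `|phi x - vs x| / vs x.
pose K := \sum_(e in E) F1 e + \sum_x F2 x.
have F1ge e : e \in E -> 0 <= F1 e.
  move=> eE; apply: divr_ge0 => //; rewrite subr_ge0; exact: cov.
have F2ge x : 0 <= F2 x by apply: divr_ge0.
have A0 : 0 <= \sum_(e in E) F1 e by apply: sumr_ge0 => e /F1ge.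
have B0 : 0 <= \sum_x F2 x by apply: sumr_ge0.
have K0 : 0 <= K by rewrite /K; lra.
pose t := (1 + K)^-1.
have t0 : 0 < t by rewrite /t invr_gt0; lra.
pose w x := vs x + t * (vs x - phi x).
have sumw (A : pred V) : \sum_(x in A) w x =
    \sum_(x in A) vs x + t * (\sum_(x in A) vs x - \sum_(x in A) phi x).
  by rewrite big_split /= -mulr_sumr sumrB.
have wf : cover_feasible E w.
  split.
    move=> e eE; rewrite sumw.
    have se1 := cov e eE.
    case: (eqVneq (s e) 1) => se.
      have := ph1 e eE se; rewrite /s in se; rewrite se; nra.
    have sgt : 1 < s e by rewrite lt_neqAle eq_sym se.
    have := @key_ineq R K (p e - s e) (s e - 1) K0.
    rewrite subr_gt0 => /(_ sgt).
    have : F1 e <= K.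
      have := @term_le R _ (fun e => e \in E) F1 e eE F1ge; rewrite /K; lra.
    move=> hK /(_ hK) => hk.
    change (1 <= s e + t * (s e - p e)).
    have -> : t * (s e - p e) = - (t * (p e - s e)) by rewrite -mulrN opprB.
    rewrite /t; lra.
  move=> x; rewrite /w.
  case: (eqVneq (vs x) 0) => vx.
    have px : phi x = 0 by apply/le_anti; rewrite ph2 // ph3.
    by rewrite vx px subrr mulr0 addr0.
  have vgt : 0 < vs x by rewrite lt_neqAle eq_sym vx nn.
  have := @key_ineq R K (phi x - vs x) (vs x) K0 vgt.
  have : F2 x <= K.
    have := @term_le R _ predT F2 x isT (fun j _ => F2ge j); rewrite /K; lra.
  move=> hK /(_ hK) => hk.
  have -> : t * (vs x - phi x) = - (t * (phi x - vs x)) by rewrite -mulrN opprB.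
  rewrite /t; lra.
have := opt w wf; rewrite sumw.
have : 0 < t * (\sum_x phi x - \sum_x vs x) by rewrite mulr_gt0 // subr_gt0.
have -> : t * (\sum_x vs x - \sum_x phi x) = - (t * (\sum_x phi x - \sum_x vs x)).
  by rewrite -mulrN opprB.
lra.
Qed.
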